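(* Let $\mathcal{L}(X,\phi)$ be smooth on $(0,\infty)\times I$ ($I$ an open interval) with $\mathcal{L}_X\neq0$ and $\mathcal{L}_X+2X\mathcal{L}_{XX}\neq 0$. Define $$c_{\rm s}^2=\frac{\mathcal{L}_X}{\mathcal{L}_X+2X\mathcal{L}_{XX}},\qquad \tau=\mathcal{L}_\phi-\frac{2X\mathcal{L}_X\mathcal{L}_{X\phi}-\mathcal{L}_X\mathcal{L}_\phi}{\mathcal{L}_X+2X\mathcal{L}_{XX}}.$$ Then (a) $\tau=\left.\partial p/\partial\phi\right|_{\rho}$, i.e. $\tau=p_\phi-p_X\rho_\phi/\rho_X$ where $p=\mathcal{L}$, $\rho=2X\mathcal{L}_X-\mathcal{L}$; (b) $\tau\equiv 0$ on the domain if and only if $\left(\dfrac{\mathcal{L}_\phi}{X\mathcal{L}_X}\right)_X\equiv 0$; and (c) $\tau\equiv0$ if and only if there exist smooth functions $f$ on $I$ and $G$ on $(0,\infty)$ with $\mathcal{L}(X,\phi)=G(e^{-2f(\phi)}X)$, i.e. the Lagrangian can be brought to purely kinetic form by the field redefinition $\tilde\phi_{,\mu}=e^{-f(\phi)}\phi_{,\mu}$.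
   Context: $X=\tfrac12 g^{\mu\nu}\phi_{,\mu}\phi_{,\nu}$ is the kinetic term of the scalar field $\phi$; subscripts $X,\phi$ denote partial derivatives. $c_{\rm s}^2=p_X/\rho_X$ is the adiabatic speed of sound (derivative of $p$ with respect to $\rho$ at fixed $\phi$), and $\tau$ is the coefficient of the entropy-per-particle perturbation in the evolution equation of the gravitational potential; $\tau=0$ corresponds to adiabatic perturbations. *)

(* Defs.v *)
From Stdlib Require Import Reals.
Open Scope R_scope.

Definition is_open_interval (I : R -> Prop) : Prop :=
  (exists x, I x) /\
  (forall x y z, I x -> I z -> x <= y -> y <= z -> I y) /\
  (forall x, I x -> exists e, 0 < e /\ forall y, Rabs (y - x) < e -> I y).

Definition dom (I : R -> Prop) (X phi : R) : Prop := 0 < X /\ I phi.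

Definition pd1 (D : R -> R -> Prop) (f fx : R -> R -> R) : Prop :=
  forall x p, D x p -> derivable_pt_lim (fun y => f y p) x (fx x p).

Definition pd2 (D : R -> R -> Prop) (f fp : R -> R -> R) : Prop :=
  forall x p, D x p -> derivable_pt_lim (fun q => f x q) p (fp x p).

Definition cont2 (D : R -> R -> Prop) (f : R -> R -> R) : Prop :=
  forall x p, D x p -> forall eps, 0 < eps -> exists del, 0 < del /\
    forall y q, D y q -> Rabs (y - x) < del -> Rabs (q - p) < del ->
      Rabs (f y q - f x p) < eps.

(* C^infinity on (the open set) D: continuous, both first partials exist,
   and they are again C^infinity. *)
CoInductive smooth2 (D : R -> R -> Prop) (f : R -> R -> R) : Prop :=
  smooth2_intro : forall fx fp : R -> R -> R,
    cont2 D f -> pd1 D f fx -> pd2 D f fp ->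
    smooth2 D fx -> smooth2 D fp -> smooth2 D f.

CoInductive smooth1 (U : R -> Prop) (g : R -> R) : Prop :=
  smooth1_intro : forall g' : R -> R,
    (forall x, U x -> derivable_pt_lim g x (g' x)) ->
    smooth1 U g' -> smooth1 U g.

Definition cs2 (LX LXX : R -> R -> R) (X phi : R) : R :=
  LX X phi / (LX X phi + 2 * X * LXX X phi).

Definition tau (LX LXX Lp LXp : R -> R -> R) (X phi : R) : R :=
  Lp X phi - (2 * X * LX X phi * LXp X phi - LX X phi * Lp X phi)
             / (LX X phi + 2 * X * LXX X phi).

(* energy density rho = 2 X L_X - L ; pressure p = L *)
Definition rho (L LX : R -> R -> R) (X phi : R) : R := 2 * X * LX X phi - L X phi.

(* Main.v *)
Require Import Defs.
From Stdlib Require Import Reals Lra.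
From Coquelicot Require Import Coquelicot.
Open Scope R_scope.

Lemma dpl_ext (f g : R -> R) x l d : 0 < d -> (forall y, Rabs (y - x) < d -> f y = g y) ->
  derivable_pt_lim f x l -> derivable_pt_lim g x l.
Proof.
intros Hd Heq H eps Heps. destruct (H eps Heps) as [del Hdel].
assert (Hm : 0 < Rmin del d) by (apply Rmin_pos; [apply cond_pos|lra]).
exists (mkposreal _ Hm). intros h hne hlt. simpl in hlt.
rewrite <- (Heq (x+h)), <- (Heq x).
- apply Hdel; auto. apply Rlt_le_trans with (1:=hlt); apply Rmin_l.
- rewrite Rminus_eq_0, Rabs_R0; lra.
- replace (x+h-x) with h by ring. apply Rlt_le_trans with (1:=hlt); apply Rmin_r.
Qed.

Lemma D_eq f x a b : derivable_pt_lim f x a -> a = b -> derivable_pt_lim f x b.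
Proof. intros H <-; exact H. Qed.
Lemma D_mult f g x a b : derivable_pt_lim f x a -> derivable_pt_lim g x b ->
  derivable_pt_lim (fun y => f y * g y) x (a * g x + f x * b).
Proof. intros; exact (derivable_pt_lim_mult f g x a b H H0). Qed.
Lemma D_plus f g x a b : derivable_pt_lim f x a -> derivable_pt_lim g x b ->
  derivable_pt_lim (fun y => f y + g y) x (a + b).
Proof. intros; exact (derivable_pt_lim_plus f g x a b H H0). Qed.
Lemma D_minus f g x a b : derivable_pt_lim f x a -> derivable_pt_lim g x b ->
  derivable_pt_lim (fun y => f y - g y) x (a - b).
Proof. intros; exact (derivable_pt_lim_minus f g x a b H H0). Qed.
Lemma D_const c x : derivable_pt_lim (fun _ => c) x 0.
Proof. exact (derivable_pt_lim_const c x). Qed.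
Lemma D_id x : derivable_pt_lim (fun y => y) x 1.
Proof. exact (derivable_pt_lim_id x). Qed.
Lemma D_comp f g x a b : derivable_pt_lim f x a -> derivable_pt_lim g (f x) b ->
  derivable_pt_lim (fun y => g (f y)) x (b * a).
Proof. intros; exact (derivable_pt_lim_comp f g x a b H H0). Qed.
Lemma D_exp x : derivable_pt_lim exp x (exp x).
Proof. exact (derivable_pt_lim_exp x). Qed.
Lemma D_div f g x a b : derivable_pt_lim f x a -> derivable_pt_lim g x b -> g x <> 0 ->
  derivable_pt_lim (fun y => f y / g y) x ((a * g x - b * f x) / (g x)²).
Proof. intros; exact (derivable_pt_lim_div f g x a b H H0 H1). Qed.
Lemma D_inv g x b : derivable_pt_lim g x b -> g x <> 0 ->
  derivable_pt_lim (fun y => / g y) x (- b / (g x)²).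
Proof. intros H Hn. apply dpl_ext with (fun y => 1 / g y) 1; [lra| intros; unfold Rdiv; ring|].
eapply D_eq. { apply D_div. apply D_const. exact H. exact Hn. } unfold Rsqr; field; auto. Qed.

Lemma dom_loc I X p : is_open_interval I -> dom I X p ->
  exists d, 0 < d /\ forall u v, Rabs (u - X) < d -> Rabs (v - p) < d -> dom I u v.
Proof.
intros [_ [_ Hop]] [HX Hp]. destruct (Hop p Hp) as [e [He Hy]].
exists (Rmin X e). split. apply Rmin_pos; lra.
intros u v Hu Hv. pose proof (Rmin_l X e). pose proof (Rmin_r X e). split.
- apply Rabs_def2 in Hu; lra.
- apply Hy; lra.
Qed.

Lemma pd1_tr I f g gx : is_open_interval I -> pd1 (dom I) f gx ->
  (forall x p, dom I x p -> f x p = g x p) -> pd1 (dom I) g gx.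
Proof.
intros HI H Heq x p Hd. destruct (dom_loc I x p HI Hd) as [d [Hd0 Hl]].
apply dpl_ext with (fun y => f y p) d; auto.
intros y Hy; apply Heq, Hl; auto. rewrite Rminus_eq_0, Rabs_R0; lra.
Qed.

Lemma pd2_tr I f g gp : is_open_interval I -> pd2 (dom I) f gp ->
  (forall x p, dom I x p -> f x p = g x p) -> pd2 (dom I) g gp.
Proof.
intros HI H Heq x p Hd. destruct (dom_loc I x p HI Hd) as [d [Hd0 Hl]].
apply dpl_ext with (fun q => f x q) d; auto.
intros y Hy; apply Heq, Hl; auto. rewrite Rminus_eq_0, Rabs_R0; lra.
Qed.

Lemma pd1_uniq D f a b : pd1 D f a -> pd1 D f b -> forall x p, D x p -> a x p = b x p.
Proof. intros Ha Hb x p Hd. exact (uniqueness_limite _ _ _ _ (Ha x p Hd) (Hb x p Hd)). Qed.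
Lemma pd2_uniq D f a b : pd2 D f a -> pd2 D f b -> forall x p, D x p -> a x p = b x p.
Proof. intros Ha Hb x p Hd. exact (uniqueness_limite _ _ _ _ (Ha x p Hd) (Hb x p Hd)). Qed.

Lemma cont2_2d I f x p : is_open_interval I -> cont2 (dom I) f -> dom I x p ->
  continuity_2d_pt f x p.
Proof.
intros HI Hc Hd eps. destruct (Hc x p Hd eps (cond_pos eps)) as [del [Hdel H]].
destruct (dom_loc I x p HI Hd) as [d [Hd0 Hl]].
assert (Hm : 0 < Rmin del d) by (apply Rmin_pos; lra).
exists (mkposreal _ Hm). simpl. intros u v Hu Hv.
pose proof (Rmin_l del d). pose proof (Rmin_r del d).
apply H; [apply Hl| |]; lra.
Qed.

Lemma const_on f a b : (forall x, Rmin a b <= x <= Rmax a b -> derivable_pt_lim f x 0) -> f b = f a.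
Proof.
intros H. destruct (MVT_gen f a b (fun _ => 0)) as [c [_ Hc]].
- intros x Hx. apply is_derive_Reals. apply H; lra.
- intros x Hx. apply derivable_continuous_pt. exists 0. apply H; auto.
- lra.
Qed.

Lemma smooth1_const U : forall c, smooth1 U (fun _ => c).
Proof. cofix CH. intro c. apply (smooth1_intro U (fun _ => c) (fun _ => 0)).
intros; apply D_const. apply CH. Qed.

Inductive E (U : R -> Prop) : (R -> R) -> Prop :=
| E_sm g : smooth1 U g -> E U g
| E_inv g : smooth1 U g -> (forall x, U x -> g x <> 0) -> E U (fun x => / g x)
| E_plus f g : E U f -> E U g -> E U (fun x => f x + g x)
| E_mult f g : E U f -> E U g -> E U (fun x => f x * g x).

Lemma E_deriv U f : E U f -> exists f', E U f' /\ forall x, U x -> derivable_pt_lim f x (f' x).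
Proof.
induction 1 as [g Hg|g Hg Hn|f g Hf [f' [Hf' Hdf]] Hg [g' [Hg' Hdg]]|f g Hf [f' [Hf' Hdf]] Hg [g' [Hg' Hdg]]].
- destruct Hg as [g' Hd Hs]. exists g'. split; [apply E_sm; auto|auto].
- pose proof Hg as Hg0. destruct Hg as [g' Hd Hs].
  exists (fun x => ((fun _ => -1) x * g' x) * ((fun x => / g x) x * (fun x => / g x) x)).
  split.
  + apply E_mult; apply E_mult; try apply E_inv; auto; apply E_sm; auto. apply smooth1_const.
  + intros x Hx. eapply D_eq. apply D_inv; auto. unfold Rsqr; field; auto.
- exists (fun x => f' x + g' x). split. apply E_plus; auto. intros; apply D_plus; auto.
- exists (fun x => f' x * g x + f x * g' x). split.
  + apply E_plus; apply E_mult; auto.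
  + intros; apply D_mult; auto.
Qed.

Lemma E_smooth U : forall f, E U f -> smooth1 U f.
Proof. cofix CH. intros f Hf. destruct (E_deriv U f Hf) as [f' [Hf' Hd]].
apply (smooth1_intro U f f' Hd). apply CH; exact Hf'. Qed.

Lemma sect2 D x0 U : forall F, (forall q, U q -> D x0 q) -> smooth2 D F -> smooth1 U (fun q => F x0 q).
Proof. cofix CH. intros F HU HF. destruct HF as [fx fp _ _ Hp _ Hsp].
apply (smooth1_intro U _ (fun q => fp x0 q)). intros q Hq; apply Hp; auto. apply CH; auto. Qed.

Lemma sect1 D p0 U : forall F, (forall x, U x -> D x p0) -> smooth2 D F -> smooth1 U (fun x => F x p0).
Proof. cofix CH. intros F HU HF. destruct HF as [fx fp _ Hx _ Hsx _].
apply (smooth1_intro U _ (fun x => fx x p0)). intros q Hq; apply Hx; auto. apply CH; auto. Qed.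

Lemma diff_partials I L fx fp x p : is_open_interval I -> pd1 (dom I) L fx -> pd2 (dom I) L fp ->
  cont2 (dom I) fx -> dom I x p -> differentiable_pt_lim L x p (fx x p) (fp x p).
Proof.
intros HI H1 H2 Hc Hd eps.
assert (He2 : 0 < eps / 2) by (pose proof (cond_pos eps); lra).
destruct (Hc x p Hd _ He2) as [del1 [Hdel1 Hc1]].
destruct (H2 x p Hd _ He2) as [del2 Hc2].
destruct (dom_loc I x p HI Hd) as [d [Hd0 Hl]].
assert (Hm : 0 < Rmin del1 (Rmin del2 d)).
{ apply Rmin_pos; [lra| apply Rmin_pos; [apply cond_pos|lra]]. }
exists (mkposreal _ Hm). simpl. intros u v Hu Hv.
pose proof (Rmin_l del1 (Rmin del2 d)). pose proof (Rmin_r del1 (Rmin del2 d)).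
pose proof (Rmin_l del2 d). pose proof (Rmin_r del2 d).
destruct (MVT_gen (fun z => L z v) x u (fun z => fx z v)) as [c [Hcm Hmvt]].
- intros z Hz. apply is_derive_Reals. apply H1. apply Hl; [|lra].
  unfold Rmin, Rmax in Hz; destruct (Rle_dec x u); apply Rabs_def2 in Hu; apply Rabs_def1; lra.
- intros z Hz. apply derivable_continuous_pt. exists (fx z v). apply H1. apply Hl; [|lra].
  unfold Rmin, Rmax in Hz; destruct (Rle_dec x u); apply Rabs_def2 in Hu; apply Rabs_def1; lra.
- simpl in Hmvt.
  assert (Hcx : Rabs (c - x) <= Rabs (u - x)).
  { unfold Rmin, Rmax in Hcm; destruct (Rle_dec x u);
    [rewrite !Rabs_pos_eq by lra; lra | rewrite !Rabs_left1 by lra; lra]. }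
  assert (HA : Rabs (L u v - L x v - fx x p * (u - x)) <= eps / 2 * Rabs (u - x)).
  { replace (L u v - L x v - fx x p * (u - x)) with ((fx c v - fx x p) * (u - x)) by lra.
    rewrite Rabs_mult. apply Rmult_le_compat_r. apply Rabs_pos.
    apply Rlt_le, Hc1; [apply Hl| |]; lra. }
  assert (HB : Rabs (L x v - L x p - fp x p * (v - p)) <= eps / 2 * Rabs (v - p)).
  { destruct (Req_dec v p) as [->|Hne].
    - replace (L x p - L x p - fp x p * (p - p)) with 0 by ring. rewrite Rabs_R0.
      pose proof (Rabs_pos (p - p)); nra.
    - assert (Hh : v - p <> 0) by lra.
      specialize (Hc2 (v - p) Hh). replace (p + (v - p)) with v in Hc2 by ring.
      assert (Hlt : Rabs (v - p) < del2) by lra. specialize (Hc2 Hlt).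
      replace (L x v - L x p - fp x p * (v - p)) with
        (((L x v - L x p) / (v - p) - fp x p) * (v - p)) by (field; auto).
      rewrite Rabs_mult. apply Rmult_le_compat_r. apply Rabs_pos. lra. }
  pose proof (Rmax_l (Rabs (u - x)) (Rabs (v - p))).
  pose proof (Rmax_r (Rabs (u - x)) (Rabs (v - p))).
  pose proof (cond_pos eps).
  eapply Rle_trans. 2: apply Rle_trans with (eps / 2 * Rabs (u - x) + eps / 2 * Rabs (v - p)).
  replace (L u v - L x p - (fx x p * (u - x) + fp x p * (v - p))) with
    ((L u v - L x v - fx x p * (u - x)) + (L x v - L x p - fp x p * (v - p))) by ring.
  apply Rabs_triang. lra. nra.
Qed.

Lemma Derive_pt f x l : derivable_pt_lim f x l -> Derive f x = l.
Proof. intros H. apply is_derive_unique. apply is_derive_Reals. exact H. Qed.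

Lemma mixed I L fx fp fxp fpx : is_open_interval I -> pd1 (dom I) L fx -> pd2 (dom I) L fp ->
  pd2 (dom I) fx fxp -> pd1 (dom I) fp fpx -> cont2 (dom I) fxp -> cont2 (dom I) fpx ->
  forall x p, dom I x p -> fpx x p = fxp x p.
Proof.
intros HI H1 H2 H3 H4 C3 C4.
assert (E1 : forall u v, dom I u v -> derivable_pt_lim (fun z => Derive (fun t => L z t) v) u (fpx u v)).
{ intros u v Hd. destruct (dom_loc I u v HI Hd) as [d [Hd0 Hl]].
  apply dpl_ext with (fun z => fp z v) d; auto.
  intros y Hy. symmetry. apply Derive_pt. apply H2. apply Hl; auto. rewrite Rminus_eq_0, Rabs_R0; lra. }
assert (E2 : forall u v, dom I u v -> derivable_pt_lim (fun z => Derive (fun t => L t z) u) v (fxp u v)).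
{ intros u v Hd. destruct (dom_loc I u v HI Hd) as [d [Hd0 Hl]].
  apply dpl_ext with (fun z => fx u z) d; auto.
  intros y Hy. symmetry. apply Derive_pt. apply H1. apply Hl; auto. rewrite Rminus_eq_0, Rabs_R0; lra. }
intros x p Hd.
destruct (dom_loc I x p HI Hd) as [d [Hd0 Hl]].
assert (Hloc : locally_2d (fun u v => dom I u v) x p).
{ exists (mkposreal _ Hd0). simpl. intros; apply Hl; auto. }
pose proof (Schwarz L x p) as S.
rewrite (Derive_pt _ _ _ (E1 x p Hd)), (Derive_pt _ _ _ (E2 x p Hd)) in S.
apply S.
- destruct Hloc as [dl Hdl]. exists dl. intros u v Hu Hv. specialize (Hdl u v Hu Hv).
  repeat split.
  + exists (fx u v). apply is_derive_Reals; auto.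
  + exists (fp u v). apply is_derive_Reals; auto.
  + exists (fpx u v). apply is_derive_Reals; auto.
  + exists (fxp u v). apply is_derive_Reals; auto.
- apply continuity_2d_pt_ext_loc with fpx.
  + destruct Hloc as [dl Hdl]. exists dl. intros u v Hu Hv. specialize (Hdl u v Hu Hv).
    symmetry; apply Derive_pt; auto.
  + apply cont2_2d with I; auto.
- apply continuity_2d_pt_ext_loc with fxp.
  + destruct Hloc as [dl Hdl]. exists dl. intros u v Hu Hv. specialize (Hdl u v Hu Hv).
    symmetry; apply Derive_pt; auto.
  + apply cont2_2d with I; auto.
Qed.

Theorem mainTheorem2
  (I : R -> Prop) (L LX LXX Lp LXp : R -> R -> R)
  (HI : is_open_interval I)
  (HL : smooth2 (dom I) L)
  (HLX : pd1 (dom I) L LX) (HLXX : pd1 (dom I) LX LXX)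
  (HLp : pd2 (dom I) L Lp) (HLXp : pd2 (dom I) LX LXp)
  (Hnz1 : forall X phi, dom I X phi -> LX X phi <> 0)
  (Hnz2 : forall X phi, dom I X phi -> LX X phi + 2 * X * LXX X phi <> 0) :
  (forall X phi, dom I X phi -> forall rX rphi : R,
     derivable_pt_lim (fun Y => rho L LX Y phi) X rX ->
     derivable_pt_lim (fun q => rho L LX X q) phi rphi ->
     tau LX LXX Lp LXp X phi = Lp X phi - LX X phi * rphi / rX)
  /\
  ((forall X phi, dom I X phi -> tau LX LXX Lp LXp X phi = 0) <->
   (forall X phi, dom I X phi ->
      derivable_pt_lim (fun Y => Lp Y phi / (Y * LX Y phi)) X 0))
  /\
  ((forall X phi, dom I X phi -> tau LX LXX Lp LXp X phi = 0) <->
   (exists (f G : R -> R), smooth1 I f /\ smooth1 (fun Y => 0 < Y) G /\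
      forall X phi, dom I X phi -> L X phi = G (exp (-2 * f phi) * X))).
Proof.
pose proof HL as HL0.
destruct HL0 as [fx fp cL pL1 pL2 sfx sfp].
pose proof sfx as sfx0. destruct sfx0 as [fxx fxp cfx pfx1 pfx2 sfxx sfxp].
destruct sfxp as [? ? cfxp _ _ _ _].
pose proof sfp as sfp0. destruct sfp0 as [fpx fpp cfp pfp1 pfp2 sfpx sfpp].
destruct sfpx as [? ? cfpx _ _ _ _].
assert (EX : forall x p, dom I x p -> fx x p = LX x p) by exact (pd1_uniq _ _ _ _ pL1 HLX).
assert (EP : forall x p, dom I x p -> fp x p = Lp x p) by exact (pd2_uniq _ _ _ _ pL2 HLp).
assert (EXX : forall x p, dom I x p -> fxx x p = LXX x p)
  by exact (pd1_uniq _ _ _ _ (pd1_tr _ _ _ _ HI pfx1 EX) HLXX).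
assert (EXP : forall x p, dom I x p -> fxp x p = LXp x p)
  by exact (pd2_uniq _ _ _ _ (pd2_tr _ _ _ _ HI pfx2 EX) HLXp).
assert (pLpX : pd1 (dom I) Lp fpx) by exact (pd1_tr _ _ _ _ HI pfp1 EP).
assert (EM : forall x p, dom I x p -> fpx x p = LXp x p).
{ intros x p Hd. rewrite <- EXP by auto. apply (mixed I L fx fp fxp fpx); auto. }
assert (PB : (forall X phi, dom I X phi -> tau LX LXX Lp LXp X phi = 0) <->
   (forall X phi, dom I X phi ->
      derivable_pt_lim (fun Y => Lp Y phi / (Y * LX Y phi)) X 0)).
{ assert (Hk : forall X phi, dom I X phi ->
    derivable_pt_lim (fun Y => Lp Y phi / (Y * LX Y phi)) X
     ((LXp X phi * (X * LX X phi) - (1 * LX X phi + X * LXX X phi) * Lp X phi) / (X * LX X phi)²)).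
  { intros X phi Hd. pose proof (Hnz1 X phi Hd). destruct Hd as [HX Hp].
    eapply D_eq. apply D_div.
    - apply pLpX; split; auto.
    - apply D_mult. apply D_id. apply HLXX; split; auto.
    - apply Rmult_integral_contrapositive_currified; lra.
    - rewrite EM by (split; auto). reflexivity. }
  split.
  - intros Ht X phi Hd. eapply D_eq. apply Hk; auto.
    specialize (Ht X phi Hd). pose proof (Hnz1 X phi Hd). pose proof (Hnz2 X phi Hd).
    destruct Hd as [HX Hp]. unfold tau in Ht.
    set (a := LX X phi) in *. set (b := LXX X phi) in *. set (c := Lp X phi) in *.
    set (e := LXp X phi) in *.
    assert (Hn : 2 * c * a + 2 * X * c * b - 2 * X * a * e = 0).
    { replace (2 * c * a + 2 * X * c * b - 2 * X * a * e) with
        ((c - (2 * X * a * e - a * c) / (a + 2 * X * b)) * (a + 2 * X * b)) by (field; auto).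
      rewrite Ht; ring. }
    unfold Rsqr. apply Rmult_eq_reg_r with (-2 * (X * a) * (X * a)).
    2: { apply Rmult_integral_contrapositive_currified;
         [apply Rmult_integral_contrapositive_currified|]; try lra;
         apply Rmult_integral_contrapositive_currified; lra. }
    rewrite Rmult_0_l. rewrite <- Hn. field. split; lra.
  - intros Hd0 X phi Hd. pose proof (uniqueness_limite _ _ _ _ (Hk X phi Hd) (Hd0 X phi Hd)) as Hu.
    pose proof (Hnz1 X phi Hd). pose proof (Hnz2 X phi Hd).
    destruct Hd as [HX Hp]. unfold tau.
    set (a := LX X phi) in *. set (b := LXX X phi) in *. set (c := Lp X phi) in *.
    set (e := LXp X phi) in *. unfold Rsqr in Hu.
    assert (Hn : 2 * c * a + 2 * X * c * b - 2 * X * a * e = 0).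
    { replace (2 * c * a + 2 * X * c * b - 2 * X * a * e) with
        (-2 * (X * a) * (X * a) * ((e * (X * a) - (1 * a + X * b) * c) / (X * a * (X * a))))
        by (field; split; lra).
      rewrite Hu; ring. }
    replace (c - (2 * X * a * e - a * c) / (a + 2 * X * b)) with
      ((2 * c * a + 2 * X * c * b - 2 * X * a * e) / (a + 2 * X * b)) by (field; auto).
    rewrite Hn. field; auto. }
split; [|split; [exact PB|]].
-
  intros X phi Hd rX rphi HrX Hrphi.
  pose proof (Hnz2 X phi Hd) as Hn2.
  assert (A1 : rX = LX X phi + 2 * X * LXX X phi).
  { apply (uniqueness_limite (fun Y => rho L LX Y phi) X); auto. unfold rho.
    eapply D_eq. apply D_minus. apply D_mult. apply D_mult. apply D_const. apply D_id.
    apply HLXX; auto. apply HLX; auto. cbv beta; ring. }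
  assert (A2 : rphi = 2 * X * LXp X phi - Lp X phi).
  { apply (uniqueness_limite (fun q => rho L LX X q) phi); auto. unfold rho.
    eapply D_eq. apply D_minus. apply D_mult. apply D_const.
    apply HLXp; auto. apply HLp; auto. cbv beta; ring. }
  subst rX rphi. unfold tau. field. auto.
- pose proof HI as HI0. destruct HI0 as [[phi0 Hphi0] [Hconv Hop]].
  split.
  + intros Ht.
    pose proof (proj1 PB Ht) as Hk.
    assert (Hc : forall X phi, dom I X phi -> Lp X phi / (X * LX X phi) = Lp 1 phi / (1 * LX 1 phi)).
    { intros X phi [HX Hp].
      apply (const_on (fun Y => Lp Y phi / (Y * LX Y phi)) 1 X).
      intros x Hx. apply Hk. split; auto.
      unfold Rmin in Hx; destruct (Rle_dec 1 X); lra. }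
    assert (D1 : forall q, I q -> dom I 1 q) by (intros q Hq; split; [lra|auto]).
    set (hp := fun q => fp 1 q * / fx 1 q).
    assert (Shp : smooth1 I hp).
    { apply E_smooth. unfold hp. apply E_mult.
      - apply E_sm. apply (sect2 (dom I) 1 I fp); auto.
      - apply E_inv. apply (sect2 (dom I) 1 I fx); auto.
        intros q Hq. rewrite EX by auto. apply Hnz1; auto. }
    set (hh := fun q => -(1/2) * hp q).
    assert (Shh : smooth1 I hh).
    { apply E_smooth. unfold hh. apply E_mult; apply E_sm; [apply smooth1_const| exact Shp]. }
    assert (Dhh : forall q, I q -> continuous hh q).
    { intros q Hq. destruct Shh as [g' Hd _]. apply (@ex_derive_continuous R_AbsRing R_NormedModule hh q). exists (g' q).
      apply is_derive_Reals; auto. }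
    set (f := fun q => RInt hh phi0 q).
    assert (Df : forall q, I q -> derivable_pt_lim f q (hh q)).
    { intros q Hq. apply is_derive_Reals. apply (is_derive_RInt hh f phi0 q).
      - destruct (Hop q Hq) as [e [He Hb]]. exists (mkposreal e He). intros b Hbb.
        unfold f. apply (@RInt_correct R_CompleteNormedModule). apply (@ex_RInt_continuous R_CompleteNormedModule). intros z Hz. apply Dhh.
        assert (I b) by (apply Hb; exact Hbb).
        unfold Rmin, Rmax in Hz; destruct (Rle_dec phi0 b);
          [apply (Hconv phi0 z b)|apply (Hconv b z phi0)]; auto; lra.
      - apply Dhh; auto. }
    assert (Sf : smooth1 I f) by exact (smooth1_intro I f hh Df Shh).
    set (G := fun Y => L Y phi0).
    assert (SG : smooth1 (fun Y => 0 < Y) G).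
    { apply (sect1 (dom I) phi0 (fun Y => 0 < Y) L); auto. intros x Hx; split; auto. }
    exists f, G. split; [exact Sf|split; [exact SG|]].
    intros X phi [HX Hp].
    set (Y := exp (-2 * f phi) * X).
    assert (HY : 0 < Y) by (unfold Y; apply Rmult_lt_0_compat; [apply exp_pos|lra]).
    set (F := fun q => L (exp (2 * f q) * Y) q).
    assert (HF : F phi = F phi0).
    { apply const_on. intros q Hq.
      assert (Iq : I q) by (unfold Rmin, Rmax in Hq; destruct (Rle_dec phi0 phi);
          [apply (Hconv phi0 q phi)|apply (Hconv phi q phi0)]; auto; lra).
      assert (Ha : 0 < exp (2 * f q) * Y) by (apply Rmult_lt_0_compat; [apply exp_pos|lra]).
      assert (Hdq : dom I (exp (2 * f q) * Y) q) by (split; auto).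
      unfold F. eapply D_eq.
      { apply (derivable_pt_lim_comp_2d L (fun q => exp (2 * f q) * Y) (fun q => q)).
        - apply (diff_partials I L fx fp); auto.
        - apply D_mult. apply (D_comp (fun q => 2 * f q) exp). apply D_mult. apply D_const.
          apply Df; auto. apply D_exp. apply D_const.
        - apply D_id. }
      cbv beta. set (a := exp (2 * f q) * Y) in *.
      rewrite (EX a q Hdq), (EP a q Hdq).
      pose proof (Hc a q Hdq) as Hca. pose proof (Hnz1 a q Hdq) as N1.
      pose proof (Hnz1 1 q (D1 q Iq)) as N2.
      assert (Hl : Lp a q = hp q * (a * LX a q)).
      { unfold hp. rewrite (EX 1 q (D1 q Iq)), (EP 1 q (D1 q Iq)).
        replace (Lp 1 q * / LX 1 q) with (Lp 1 q / (1 * LX 1 q)) by (field; auto).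
        rewrite <- Hca. field. split; lra. }
      rewrite Hl. unfold hh; cbv beta. unfold a. field. }
    assert (Hf0 : f phi0 = 0) by (unfold f; exact (@RInt_point R_CompleteNormedModule phi0 hh)).
    unfold F in HF. rewrite Hf0 in HF.
    replace (exp (2 * f phi) * Y) with X in HF.
    * rewrite HF. unfold G. rewrite Rmult_0_r, exp_0, Rmult_1_l. reflexivity.
    * unfold Y. rewrite <- Rmult_assoc, <- exp_plus.
      replace (2 * f phi + -2 * f phi) with 0 by ring. rewrite exp_0; ring.
  + intros [f [G [Sf [SG Heq]]]] X phi Hd.
    destruct Sf as [f1 Df1 _]. destruct SG as [g1 Dg1 Sg1]. destruct Sg1 as [g2 Dg2 _].
    assert (LXf : forall X phi, dom I X phi ->
              LX X phi = g1 (exp (-2 * f phi) * X) * exp (-2 * f phi)).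
    { intros X0 p0 [HX0 Hp0]. apply (uniqueness_limite (fun Y => L Y p0) X0).
      apply HLX; split; auto.
      apply dpl_ext with (fun Y => G (exp (-2 * f p0) * Y)) X0; auto.
      - intros y Hy. symmetry. apply Heq. split; auto. apply Rabs_def2 in Hy; lra.
      - eapply D_eq.
        { apply (D_comp (fun Y => exp (-2 * f p0) * Y) G). apply D_mult. apply D_const. apply D_id.
          apply Dg1. cbv beta. apply Rmult_lt_0_compat; [apply exp_pos|lra]. }
        cbv beta; ring. }
    destruct Hd as [HX Hp].
    assert (Hd : dom I X phi) by (split; auto).
    set (a := exp (-2 * f phi)).
    assert (Ha : 0 < a) by apply exp_pos.
    assert (Haw : 0 < a * X) by (apply Rmult_lt_0_compat; lra).
    assert (LXXf : LXX X phi = g2 (a * X) * a * a).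
    { apply (uniqueness_limite (fun Y => LX Y phi) X). apply HLXX; auto.
      apply dpl_ext with (fun Y => g1 (a * Y) * a) X; auto.
      - intros y Hy. symmetry. apply LXf. split; auto. apply Rabs_def2 in Hy; lra.
      - eapply D_eq.
        { apply D_mult. apply (D_comp (fun Y => a * Y) g1). apply D_mult. apply D_const. apply D_id.
          apply Dg2. cbv beta. auto. apply D_const. }
        cbv beta; ring. }
    destruct (dom_loc I X phi HI Hd) as [d [Hd0 Hl]].
    assert (Hin : derivable_pt_lim (fun q => exp (-2 * f q) * X) phi (a * (-2 * f1 phi) * X)).
    { eapply D_eq.
      { apply D_mult. apply (D_comp (fun q => -2 * f q) exp). apply D_mult. apply D_const.
        apply Df1; auto. apply D_exp. apply D_const. }
      cbv beta. unfold a. ring. }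
    assert (Lpf : Lp X phi = g1 (a * X) * (a * (-2 * f1 phi) * X)).
    { apply (uniqueness_limite (fun q => L X q) phi). apply HLp; auto.
      apply dpl_ext with (fun q => G (exp (-2 * f q) * X)) d; auto.
      - intros y Hy. symmetry. apply Heq. apply Hl; auto. rewrite Rminus_eq_0, Rabs_R0; lra.
      - eapply D_eq.
        { apply (D_comp (fun q => exp (-2 * f q) * X) G). exact Hin.
          apply Dg1. cbv beta. auto. }
        cbv beta; unfold a; ring. }
    assert (LXpf : LXp X phi = g2 (a * X) * (a * (-2 * f1 phi) * X) * a
                               + g1 (a * X) * (a * (-2 * f1 phi))).
    { apply (uniqueness_limite (fun q => LX X q) phi). apply HLXp; auto.
      apply dpl_ext with (fun q => g1 (exp (-2 * f q) * X) * exp (-2 * f q)) d; auto.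
      - intros y Hy. symmetry. apply LXf. apply Hl; auto. rewrite Rminus_eq_0, Rabs_R0; lra.
      - eapply D_eq.
        { apply D_mult. apply (D_comp (fun q => exp (-2 * f q) * X) g1). exact Hin.
          apply Dg2. cbv beta. auto.
          apply (D_comp (fun q => -2 * f q) exp). apply D_mult. apply D_const.
          apply Df1; auto. apply D_exp. }
        cbv beta. unfold a. ring. }
    pose proof (Hnz2 X phi Hd) as N2. pose proof (LXf X phi Hd) as LXe.
    fold a in LXe.
    unfold tau. rewrite LXe, LXXf, Lpf, LXpf. rewrite LXe, LXXf in N2.
    field. exact N2.
Qed.
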